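(* For all closed closures $(t,e)$ and $(s,d)$, $(t, e) \approx_{\mathrm{app}} (s, d)$ if and only if $\langle t, e, []\rangle_{\mathrm{ev}} \approx \langle s, d, []\rangle_{\mathrm{ev}}$, where $\approx$ is machine bisimilarity on configurations of the AB machine.
   Context: De Bruijn terms $t,s ::= n \mid t\,s \mid \lambda.t$ ($n\in\mathbb N$); closures $\sigma ::= (t,e)$; environments $e,d ::= \sigma :: e \mid \varepsilon$; stacks $\pi ::= \sigma::\pi \mid []$; application stacks $\rho ::= (t,\kappa)::\rho \mid \epsilon$ with $\kappa\in\mathbb N$. A term is closed if it has no free indices; a closure $(t,e)$ is closed if the length of $e$ exceeds the largest free index of $t$ and all closures in $e$ are closed. AB machine configurations: $\langle t, e, \pi\rangle_{\mathrm{ev}}$, $\langle n, \rho, \sigma\rangle_{\mathrm{ind}}$, $\langle t, \kappa, \rho, \sigma\rangle_{\mathrm{tm}}$. Transitions (labelled by $\tau$ or by a flag): $\langle t\,s, e, \pi\rangle_{\mathrm{ev}} \xrightarrow\tau \langle t, e, (s,e)::\pi\rangle_{\mathrm{ev}}$; $\langle 0, (t,e)::d, \pi\rangle_{\mathrm{ev}}\xrightarrow\tau\langle t,e,\pi\rangle_{\mathrm{ev}}$; $\langle n+1, (t,e)::d,\pi\rangle_{\mathrm{ev}} \xrightarrow\tau\langle n, d,\pi\rangle_{\mathrm{ev}}$; $\langle\lambda.t, e, \sigma::\pi\rangle_{\mathrm{ev}} \xrightarrow\tau \langle t, \sigma::e,\pi\rangle_{\mathrm{ev}}$; $\langle \lambda.t,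 e, []\rangle_{\mathrm{ev}} \xrightarrow{\mathsf{arg}} \langle 0, \epsilon, (t,e)\rangle_{\mathrm{ind}}$; $\langle n,\rho,\sigma\rangle_{\mathrm{ind}}\xrightarrow{\mathsf{suc}}\langle n+1,\rho,\sigma\rangle_{\mathrm{ind}}$; $\langle n,\rho,\sigma\rangle_{\mathrm{ind}}\xrightarrow{\mathsf{var}}\langle n, n+1,\rho,\sigma\rangle_{\mathrm{tm}}$; $\langle t,\kappa+1,\rho,\sigma\rangle_{\mathrm{tm}}\xrightarrow{\mathsf{lam}}\langle\lambda.t,\kappa,\rho,\sigma\rangle_{\mathrm{tm}}$; $\langle t,0,\rho,\sigma\rangle_{\mathrm{tm}}\xrightarrow{\mathsf{lam}}\langle\lambda.t,0,\rho,\sigma\rangle_{\mathrm{tm}}$; $\langle t,\kappa,\rho,\sigma\rangle_{\mathrm{tm}}\xrightarrow{\mathsf{appfun}}\langle 0, (t,\kappa)::\rho,\sigma\rangle_{\mathrm{ind}}$; $\langle s,\kappa_1,(t,\kappa_2)::\rho,\sigma\rangle_{\mathrm{tm}}\xrightarrow{\mathsf{app}}\langle t\,s,\max(\kappa_1,\kappa_2),\rho,\sigma\rangle_{\mathrm{tm}}$; $\langle t, 0, \epsilon, (s,e)\rangle_{\mathrm{tm}}\xrightarrow{\mathsf{done}}\langle s, (t,\varepsilon)::e, []\rangle_{\mathrm{ev}}$. The $\tau$-transitions alone form the (environment-based) KAM, written $\to_\tau$. Applicative bisimulation: a symmetric relation $\mathcal R$ on closed closures such that $(t,e)\mathcal R(s,d)$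 and $\langle t,e,[]\rangle_{\mathrm{ev}}\xrightarrow\tau^*\langle\lambda.t',e',[]\rangle_{\mathrm{ev}}$ imply there exist $s',d'$ with $\langle s,d,[]\rangle_{\mathrm{ev}}\xrightarrow\tau^*\langle\lambda.s',d',[]\rangle_{\mathrm{ev}}$ and, for all closed terms $t''$, $(t',(t'',\varepsilon)::e')\,\mathcal R\,(s',(t'',\varepsilon)::d')$. $\approx_{\mathrm{app}}$ is the largest applicative bisimulation. Machine bisimulation: a symmetric relation $\mathcal R$ on configurations such that $C_1\mathcal RC_2$ implies, for every flag $F$: if $C_1\xrightarrow\tau^*\xrightarrow F C_1'$ then $C_2\xrightarrow\tau^*\xrightarrow F C_2'$ for some $C_2'$ with $C_1'\mathcal RC_2'$; and if $C_1\xrightarrow\tau^*\xrightarrow F$ by a terminating transition, then so does $C_2$. $\approx$ is the largest machine bisimulation. *)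

(* Defs.v *)
From Stdlib Require Import List Arith.
Import ListNotations.

Inductive term : Type :=
| Var : nat -> term
| App : term -> term -> term
| Lam : term -> term.

Inductive clos : Type :=
| Clos : term -> list clos -> clos.

Definition env := list clos.
Definition stack := list clos.
Definition astack := list (term * nat).

Fixpoint closed_under (t : term) (n : nat) : Prop :=
  match t with
  | Var m => m < n
  | App t1 t2 => closed_under t1 n /\ closed_under t2 n
  | Lam t1 => closed_under t1 (S n)
  end.

Definition closed_term (t : term) : Prop := closed_under t 0.

Inductive closed_clos : clos -> Prop :=
| closed_clos_intro : forall t e,
    closed_under t (length e) -> Forall closed_clos e -> closed_clos (Clos t e).

Inductive config : Type :=
| Ev  : term -> env -> stack -> config
| Ind : nat -> astack -> clos -> config
| Tm  : term -> nat -> astack -> clos -> config.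

Inductive flag : Type :=
| f_arg | f_suc | f_var | f_lam | f_appfun | f_app | f_done.

(* labels: None = tau, Some F = flag F *)
Definition label := option flag.

Inductive step : config -> label -> config -> Prop :=
| st_app : forall t s e pi,
    step (Ev (App t s) e pi) None (Ev t e (Clos s e :: pi))
| st_var0 : forall t e d pi,
    step (Ev (Var 0) (Clos t e :: d) pi) None (Ev t e pi)
| st_varS : forall n c d pi,
    step (Ev (Var (S n)) (c :: d) pi) None (Ev (Var n) d pi)
| st_beta : forall t e c pi,
    step (Ev (Lam t) e (c :: pi)) None (Ev t (c :: e) pi)
| st_arg : forall t e,
    step (Ev (Lam t) e []) (Some f_arg) (Ind 0 [] (Clos t e))
| st_suc : forall n rho c,
    step (Ind n rho c) (Some f_suc) (Ind (S n) rho c)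
| st_var : forall n rho c,
    step (Ind n rho c) (Some f_var) (Tm (Var n) (S n) rho c)
| st_lamS : forall t k rho c,
    step (Tm t (S k) rho c) (Some f_lam) (Tm (Lam t) k rho c)
| st_lam0 : forall t rho c,
    step (Tm t 0 rho c) (Some f_lam) (Tm (Lam t) 0 rho c)
| st_appfun : forall t k rho c,
    step (Tm t k rho c) (Some f_appfun) (Ind 0 ((t, k) :: rho) c)
| st_app2 : forall s k1 t k2 rho c,
    step (Tm s k1 ((t, k2) :: rho) c) (Some f_app) (Tm (App t s) (Nat.max k1 k2) rho c)
| st_done : forall t s e,
    step (Tm t 0 [] (Clos s e)) (Some f_done) (Ev s (Clos t [] :: e) []).

(* the KAM: reflexive-transitive closure of tau transitions *)
Inductive tau_star : config -> config -> Prop :=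
| ts_refl : forall C, tau_star C C
| ts_step : forall C1 C2 C3, step C1 None C2 -> tau_star C2 C3 -> tau_star C1 C3.

(* terminating (target-less) flagged transitions of the AB machine:
   the AB machine has none, so this predicate is empty. *)
Definition term_step (C : config) (F : flag) : Prop := False.

Definition weak_step (C : config) (F : flag) (C' : config) : Prop :=
  exists C0, tau_star C C0 /\ step C0 (Some F) C'.

Definition weak_term (C : config) (F : flag) : Prop :=
  exists C0, tau_star C C0 /\ term_step C0 F.

Definition is_machine_bisim (R : config -> config -> Prop) : Prop :=
  (forall C1 C2, R C1 C2 -> R C2 C1) /\
  (forall C1 C2, R C1 C2 ->
     forall F,
       (forall C1', weak_step C1 F C1' ->
          exists C2', weak_step C2 F C2' /\ R C1' C2') /\
       (weak_term C1 F -> weak_term C2 F)).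

Definition mbisim (C1 C2 : config) : Prop :=
  exists R, is_machine_bisim R /\ R C1 C2.

Definition is_app_bisim (R : clos -> clos -> Prop) : Prop :=
  (forall c1 c2, R c1 c2 -> closed_clos c1 /\ closed_clos c2) /\
  (forall c1 c2, R c1 c2 -> R c2 c1) /\
  (forall t e s d, R (Clos t e) (Clos s d) ->
     forall t' e', tau_star (Ev t e []) (Ev (Lam t') e' []) ->
       exists s' d', tau_star (Ev s d []) (Ev (Lam s') d' []) /\
         forall t'', closed_term t'' ->
           R (Clos t' (Clos t'' [] :: e')) (Clos s' (Clos t'' [] :: d'))).

Definition app_bisim (c1 c2 : clos) : Prop :=
  exists R, is_app_bisim R /\ R c1 c2.

(* Main.v *)
Require Import Defs.
From Stdlib Require Import List Arith Lia.
Import ListNotations.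

Lemma closed_mono : forall u k k', closed_under u k -> k <= k' -> closed_under u k'.
Proof.
  induction u; simpl; intros.
  - lia.
  - destruct H; split; eauto.
  - apply (IHu (S k)); auto; lia.
Qed.

Fixpoint kap (u : term) : nat :=
  match u with
  | Var n => S n
  | Lam u => pred (kap u)
  | App u1 u2 => Nat.max (kap u2) (kap u1)
  end.

Lemma kap_closed : forall u k, closed_under u k -> kap u <= k.
Proof.
  induction u; simpl; intros.
  - lia.
  - destruct H. specialize (IHu1 _ H). specialize (IHu2 _ H0). lia.
  - specialize (IHu _ H). lia.
Qed.

Lemma step_det : forall C F X Y, step C (Some F) X -> step C (Some F) Y -> X = Y.
Proof.
  intros C F X Y H1 H2; inversion H1; subst; inversion H2; subst; congruence.
Qed.

Lemma ws_nonev : forall C F X, weak_step C F X -> (forall Y, ~ step C None Y) -> step C (Some F) X.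
Proof.
  intros C F X [C0 [Ht Hs]] Hn. inversion Ht; subst; auto.
  exfalso; eapply Hn; eauto.
Qed.

Lemma ind_notau : forall n r c Y, ~ step (Ind n r c) None Y.
Proof. intros n r c Y H; inversion H. Qed.
Lemma tm_notau : forall u k r c Y, ~ step (Tm u k r c) None Y.
Proof. intros u k r c Y H; inversion H. Qed.

Lemma msim : forall C1 C2 F C1' C2', mbisim C1 C2 -> step C1 (Some F) C1' ->
  step C2 (Some F) C2' -> (forall Y, ~ step C2 None Y) -> mbisim C1' C2'.
Proof.
  intros C1 C2 F C1' C2' [R [[Hsym Hb] HR]] H1 H2 Hn.
  destruct (Hb _ _ HR F) as [Hw _].
  destruct (Hw C1') as [C2'' [Hw2 HR2]].
  { exists C1; split; [constructor|auto]. }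
  apply ws_nonev in Hw2; auto.
  rewrite (step_det _ _ _ _ Hw2 H2) in HR2.
  exists R; split; [split|]; auto.
Qed.

Lemma sucs : forall n m r c1 c2, mbisim (Ind m r c1) (Ind m r c2) ->
  mbisim (Ind (m + n) r c1) (Ind (m + n) r c2).
Proof.
  induction n; intros.
  - rewrite Nat.add_0_r; auto.
  - replace (m + S n) with (S m + n) by lia. apply IHn.
    eapply msim; [exact H|constructor|constructor|apply ind_notau].
Qed.

Lemma gen : forall u r c1 c2, mbisim (Ind 0 r c1) (Ind 0 r c2) ->
  mbisim (Tm u (kap u) r c1) (Tm u (kap u) r c2).
Proof.
  induction u; intros r c1 c2 H; simpl.
  - apply (sucs n) in H. simpl in H.
    eapply msim; [exact H|constructor|constructor|apply ind_notau].
  - specialize (IHu1 _ _ _ H).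
    assert (H2 : mbisim (Ind 0 ((u1, kap u1) :: r) c1) (Ind 0 ((u1, kap u1) :: r) c2)).
    { eapply msim; [exact IHu1|constructor|constructor|apply tm_notau]. }
    specialize (IHu2 _ _ _ H2).
    eapply msim; [exact IHu2|constructor|constructor|apply tm_notau].
  - specialize (IHu _ _ _ H). destruct (kap u) eqn:E; simpl.
    + eapply msim; [exact IHu|constructor|constructor|apply tm_notau].
    + eapply msim; [exact IHu|constructor|constructor|apply tm_notau].
Qed.

Lemma tau_ev : forall C1 C2, tau_star C1 C2 -> forall t e p, C1 = Ev t e p ->
  exists t' e' p', C2 = Ev t' e' p'.
Proof.
  induction 1; intros; subst; eauto.
  inversion H; subst; eauto.
Qed.

Lemma arg_inv : forall C X, step C (Some f_arg) X ->
  exists t e, C = Ev (Lam t) e [] /\ X = Ind 0 [] (Clos t e).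
Proof. intros C X H; inversion H; subst; eauto. Qed.

Definition cl_cfg (C : config) : Prop :=
  match C with
  | Ev t e p => closed_under t (length e) /\ Forall closed_clos e /\ Forall closed_clos p
  | _ => True
  end.

Lemma tau_closed : forall C1 C2, tau_star C1 C2 -> cl_cfg C1 -> cl_cfg C2.
Proof.
  induction 1; intros; auto. apply IHtau_star.
  inversion H; subst; simpl in *.
  - destruct H1 as [[A B] [C D]]. repeat split; auto. constructor; auto. constructor; auto.
  - destruct H1 as [A [B D]]. inversion B; subst. inversion H3; subst. auto.
  - destruct H1 as [A [B D]]. inversion B; subst. repeat split; auto. lia.
  - destruct H1 as [A [B D]]. inversion D; subst. repeat split; auto.
Qed.

Definition P t e s d := forall t'', closed_term t'' ->
  app_bisim (Clos t (Clos t'' [] :: e)) (Clos s (Clos t'' [] :: d)).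
Definition wfr (r : astack) := Forall (fun p => closed_under (fst p) (snd p)) r.

Definition RR (C1 C2 : config) : Prop :=
  (exists t e s d, C1 = Ev t e [] /\ C2 = Ev s d [] /\ app_bisim (Clos t e) (Clos s d))
  \/ (exists n r t e s d, C1 = Ind n r (Clos t e) /\ C2 = Ind n r (Clos s d) /\ wfr r /\ P t e s d)
  \/ (exists u k r t e s d, C1 = Tm u k r (Clos t e) /\ C2 = Tm u k r (Clos s d)
        /\ closed_under u k /\ wfr r /\ P t e s d).

Lemma app_sym : forall c1 c2, app_bisim c1 c2 -> app_bisim c2 c1.
Proof. intros c1 c2 [R [[A [B C]] H]]. exists R; split; [split; [|split]|]; auto. Qed.

Lemma P_sym : forall t e s d, P t e s d -> P s d t e.
Proof. unfold P; intros; apply app_sym; auto. Qed.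

Lemma RR_bisim : is_machine_bisim RR.
Proof.
  split.
  - intros C1 C2 [H|[H|H]].
    + destruct H as (t&e&s&d&->&->&H). left; do 4 eexists; repeat split; eauto using app_sym.
    + destruct H as (n&r&t&e&s&d&->&->&W&H). right; left; do 6 eexists; repeat split; eauto using P_sym.
    + destruct H as (u&k&r&t&e&s&d&->&->&Cu&W&H). right; right; do 7 eexists; repeat split; eauto using P_sym.
  - intros C1 C2 HR F; split; [|intros [C0 [_ []]]].
    intros C1' Hw. destruct HR as [H|[H|H]].
    + destruct H as (t&e&s&d&->&->&H).
      destruct Hw as [C0 [Ht Hs]].
      destruct (tau_ev _ _ Ht _ _ _ eq_refl) as (t0&e0&p0&->).
      inversion Hs; subst.
      destruct H as [R0 [[A [B Cc]] HR0]].
      destruct (Cc _ _ _ _ HR0 _ _ Ht) as (s'&d'&Hts&Hall).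
      exists (Ind 0 [] (Clos s' d')); split.
      * exists (Ev (Lam s') d' []); split; auto; constructor.
      * right; left; do 6 eexists; repeat split; eauto.
        constructor. intros t'' Ht''. exists R0; split; [split; [|split]|]; auto.
    + destruct H as (n&r&t&e&s&d&->&->&W&H).
      apply ws_nonev in Hw; [|apply ind_notau].
      inversion Hw; subst.
      * eexists; split; [exists (Ind n r (Clos s d)); split; [constructor|constructor]|].
        right; left; do 6 eexists; repeat split; eauto.
      * eexists; split; [exists (Ind n r (Clos s d)); split; [constructor|constructor]|].
        right; right; do 7 eexists; repeat split; eauto. simpl; lia.
    + destruct H as (u&k&r&t&e&s&d&->&->&Cu&W&H).
      apply ws_nonev in Hw; [|apply tm_notau].
      inversion Hw; subst.
      * eexists; split; [eexists; split; [constructor|constructor]|].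
        right; right; do 7 eexists; repeat split; eauto.
      * eexists; split; [eexists; split; [constructor|constructor]|].
        right; right; do 7 eexists; repeat split; eauto.
        simpl. eapply closed_mono; eauto.
      * eexists; split; [eexists; split; [constructor|constructor]|].
        right; left; do 6 eexists; repeat split; eauto. constructor; auto.
      * inversion W; subst. simpl in H2.
        eexists; split; [eexists; split; [constructor|constructor]|].
        right; right; do 7 eexists; repeat split; eauto.
        all: simpl in *; eapply closed_mono; eauto; lia.
      * eexists; split; [eexists; split; [constructor|constructor]|].
        left; do 4 eexists; repeat split; eauto.
Qed.

Theorem theorem5p6 : forall (t s : term) (e d : env),
  closed_clos (Clos t e) -> closed_clos (Clos s d) ->
  (app_bisim (Clos t e) (Clos s d) <-> mbisim (Ev t e []) (Ev s d [])).
Proof.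
  intros t s e d Hc1 Hc2; split.
  - intros H. exists RR; split; [apply RR_bisim|].
    left; do 4 eexists; repeat split; eauto.
  - intros H.
    exists (fun c1 c2 => exists t e s d, c1 = Clos t e /\ c2 = Clos s d /\
      closed_clos c1 /\ closed_clos c2 /\ mbisim (Ev t e []) (Ev s d [])).
    split; [|do 4 eexists; split; [reflexivity|split; [reflexivity|split; [exact Hc1|split; [exact Hc2|exact H]]]]].
    split; [|split].
    + intros c1 c2 (t0&e0&s0&d0&->&->&A&B&_); auto.
    + intros c1 c2 (t0&e0&s0&d0&->&->&A&B&[R [[Hs Hb] HR]]).
      do 4 eexists; split; [reflexivity|split; [reflexivity|split; [auto|split; [auto|]]]].
      exists R; split; [split|]; auto.
    + intros t0 e0 s0 d0 (t1&e1&s1&d1&E1&E2&A&B&HM) t' e' Ht.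
      injection E1; intros; subst. injection E2; intros; subst.
      pose proof HM as [R [[Hs Hb] HR]].
      destruct (Hb _ _ HR f_arg) as [Hw _].
      destruct (Hw (Ind 0 [] (Clos t' e'))) as [C2' [[C0 [Ht2 Hs2]] HR2]].
      { exists (Ev (Lam t') e' []); split; auto; constructor. }
      destruct (arg_inv _ _ Hs2) as (t0&e0&->&->).
      assert (HI : mbisim (Ind 0 [] (Clos t' e')) (Ind 0 [] (Clos t0 e0))).
      { exists R; split; [split|]; auto. }
      exists t0, e0; split; auto.
      intros t'' Ht''.
      assert (K : kap t'' = 0). { apply kap_closed in Ht''. lia. }
      pose proof (gen t'' [] _ _ HI) as G. rewrite K in G.
      assert (G2 : mbisim (Ev t' (Clos t'' [] :: e') []) (Ev t0 (Clos t'' [] :: e0) [])).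
      { eapply msim; [exact G|constructor|constructor|apply tm_notau]. }
      inversion A; inversion B; subst.
      assert (X1 := tau_closed _ _ Ht ltac:(simpl; auto)).
      assert (X2 := tau_closed _ _ Ht2 ltac:(simpl; auto)).
      simpl in X1, X2.
      destruct X1 as [X1a [X1b _]]; destruct X2 as [X2a [X2b _]].
      do 4 eexists; repeat split; eauto; constructor; simpl; auto;
        constructor; auto; constructor; auto.
Qed.
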